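(* Let $\mathcal P$ be a pyramid. If there exists $r>0$ such that $$\inf_{X\in\mathcal P}\sup_{x\in X}\mu_X(B_r(x))=0,$$ then there is no mm-space $X$ with $\mathcal P=\mathcal P_X$.
   Context: An mm-space is a triple $(X,d_X,\mu_X)$ with $(X,d_X)$ complete separable metric and $\mu_X$ a Borel probability measure; $\mathcal X$ is the set of mm-isomorphism classes. $Y\prec X$ means there is a 1-Lipschitz $f:X\to Y$ with $f_*\mu_X=\mu_Y$. The box distance $\square(X,Y)$ is the infimum of $\max\{\operatorname{dis}(S),1-\pi(S)\}$ over couplings $\pi$ of $\mu_X,\mu_Y$ and Borel $S\subset X\times Y$, $\operatorname{dis}(S)=\sup\{|d_X(x,x')-d_Y(y,y')|:(x,y),(x',y')\in S\}$. A pyramid is a nonempty box-closed subset of $\mathcal X$ closed downward under $\prec$ and directed; $\mathcal P_X=\{Y\in\mathcal X:Y\prec X\}$. $B_r(x)$ denotes the closed ball of radius $r$ about $x$. *)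

(* Defs.v *)
From HB Require Import structures.
From mathcomp Require Import all_boot all_order all_algebra.
From mathcomp Require Import all_classical all_reals all_analysis.
Set Implicit Arguments. Unset Strict Implicit. Unset Printing Implicit Defensive.
Import Order.TTheory GRing.Theory Num.Theory.
Local Open Scope classical_set_scope.
Local Open Scope ring_scope.

Section MM.
Variable R : realType.

Definition d_open (T : Type) (d : T -> T -> R) (A : set T) : Prop :=
  forall x, A x -> exists2 e : R, 0 < e & [set y | d x y < e] `<=` A.

Definition is_metric (T : Type) (d : T -> T -> R) : Prop :=
  [/\ forall x y, 0 <= d x y,
      forall x y, d x y = 0 <-> x = y,
      forall x y, d x y = d y x &
      forall x y z, d x z <= d x y + d y z].

Definition complete_metric (T : Type) (d : T -> T -> R) : Prop :=
  forall u : nat -> T,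
    (forall e : R, 0 < e -> exists N, forall m n, (N <= m)%N -> (N <= n)%N -> d (u m) (u n) < e) ->
    exists l, forall e : R, 0 < e -> exists N, forall n, (N <= n)%N -> d (u n) l < e.

Definition separable_metric (T : Type) (d : T -> T -> R) : Prop :=
  exists s : nat -> T, forall x (e : R), 0 < e -> exists n, d x (s n) < e.

Record mmspace := MMSpace {
  mm_disp : measure_display;
  mm_T : measurableType mm_disp;
  mm_d : mm_T -> mm_T -> R;
  mm_mu : probability mm_T R;
  mm_metric : is_metric mm_d;
  mm_complete : complete_metric mm_d;
  mm_separable : separable_metric mm_d;
  mm_borel : forall A : set mm_T, measurable A <-> <<s d_open mm_d >> A
}.

Definition cball (X : mmspace) (x : mm_T X) (r : R) : set (mm_T X) :=
  [set y | mm_d x y <= r].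

Definition dominated (Y X : mmspace) : Prop :=
  exists f : mm_T X -> mm_T Y,
    (forall x x', mm_d (f x) (f x') <= mm_d x x') /\
    (forall B : set (mm_T Y), measurable B ->
        mm_mu Y B = mm_mu X (f @^-1` B)).

Definition coupling (X Y : mmspace) (pi : probability (mm_T X * mm_T Y)%type R) : Prop :=
  (forall A : set (mm_T X), measurable A -> pi (A `*` setT) = mm_mu X A) /\
  (forall B : set (mm_T Y), measurable B -> pi (setT `*` B) = mm_mu Y B).

Definition dis (X Y : mmspace) (S : set (mm_T X * mm_T Y)) : \bar R :=
  ereal_sup [set (`| mm_d pq.1.1 pq.2.1 - mm_d pq.1.2 pq.2.2 |)%:E
            | pq in [set pq : (mm_T X * mm_T Y) * (mm_T X * mm_T Y) | S pq.1 /\ S pq.2] ].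

Definition box (X Y : mmspace) : \bar R :=
  ereal_inf [set Order.max (dis S) (1%:E - pi S)%E
            | pi in [set pi : probability (mm_T X * mm_T Y)%type R | coupling pi]
            & S in [set S : set (mm_T X * mm_T Y) | measurable S]].

(** Pyramids (as predicates on mm-spaces; downward closure under ≺ makes
    them invariant under mm-isomorphism, i.e. sets of isomorphism classes). *)
Definition box_closed (P : mmspace -> Prop) : Prop :=
  forall X, (forall e : R, 0 < e -> exists2 Y, P Y & (box Y X < e%:E)%E) -> P X.

Definition pyramid (P : mmspace -> Prop) : Prop :=
  [/\ exists X, P X,
      box_closed P,
      (forall X Y, P X -> dominated Y X -> P Y) &
      (forall X Y, P X -> P Y -> exists2 Z, P Z & dominated X Z /\ dominated Y Z)].

Definition pyramid_of (X : mmspace) : mmspace -> Prop := fun Y => dominated Y X.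

End MM.

(* Main.v *)
Require Import Defs.
From mathcomp Require Import all_boot all_order all_algebra.
From mathcomp Require Import all_classical all_reals all_analysis.
From mathcomp Require Import lra.
Import Order.TTheory GRing.Theory Num.Theory.
Local Open Scope classical_set_scope.
Local Open Scope ring_scope.

Lemma sublevel_meas (R : realType) (X : mmspace R) (h : mm_T X -> R) (r : R) :
  (forall x y, h x - h y <= mm_d x y) ->
  measurable [set x | h x <= r].
Proof.
move=> hL.
have Ho : d_open (@mm_d R X) (~` [set x | h x <= r]).
  move=> x /= /negP; rewrite -ltNge => hx.
  exists (h x - r); first by rewrite subr_gt0.
  move=> y /= dy; apply/negP; rewrite -ltNge.
  have := hL x y; lra.
have : measurable (~` [set x | h x <= r]).
  by apply/(proj2 (mm_borel _)); apply: sub_sigma_algebra.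
by move/measurableC; rewrite setCK.
Qed.

Theorem proposition6p8 (R : realType) (P : mmspace R -> Prop) :
  pyramid P ->
  (exists2 r : R, 0 < r &
     ereal_inf [set v : \bar R | exists2 X : mmspace R, P X &
                  v = ereal_sup [set mm_mu X (cball x r) | x in [set: mm_T X]]]
       = 0%E) ->
  ~ exists X : mmspace R, forall Y : mmspace R, P Y <-> pyramid_of X Y.
Proof.
move=> _ [r r0 Hinf] [X HX].
have [md1 md2 md3 md4] := mm_metric X.
have mball : forall (Y : mmspace R) (y : mm_T Y), measurable (cball y r).
  move=> Y y; have [e1 e2 e3 e4] := mm_metric Y.
  apply: sublevel_meas => a b; have := e4 y b a; rewrite (e3 b a); lra.
have [x0 hx0] : exists x0, (0 < mm_mu X (cball x0 r))%E.
  have [s hs] := mm_separable X.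
  apply: contrapT => Hn.
  have H0 : forall n, mm_mu X (cball (s n) r) = 0%E.
    move=> n; apply/eqP; rewrite eq_le measure_ge0 andbT leNgt; apply/negP => h.
    by apply: Hn; exists (s n).
  have : (mm_mu X).-negligible (\bigcup_n cball (s n) r).
    apply: negligible_bigcup => n; exists (cball (s n) r); split; [exact: mball | exact: H0 | by []].
  move=> [A [mA A0 sA]].
  have : (mm_mu X [set: mm_T X] <= mm_mu X A)%E.
    apply: le_measure; rewrite ?inE //.
    move=> x _; apply: sA.
    have [n hn] := hs x r r0; exists n => //=.
    by rewrite /cball /= md3; apply: ltW.
  by rewrite probability_setT A0 lee_fin ler10.
have : (mm_mu X (cball x0 r) <= 0)%E.
  rewrite -Hinf; apply/ereal_infP => v [Y PY ->].
  have [f [fL fmu]] := (HX Y).1 PY.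
  apply: (@le_trans _ _ (mm_mu Y (cball (f x0) r))); last first.
    by apply: ereal_sup_ubound; exists (f x0).
  rewrite fmu; last exact: mball.
  apply: le_measure; rewrite ?inE.
  - exact: mball.
  - have [e1 e2 e3 e4] := mm_metric Y.
    apply: (@sublevel_meas R X (fun x => mm_d (f x0) (f x))) => a b.
    have := e4 (f x0) (f b) (f a); rewrite (e3 (f b) (f a)).
    have := fL a b; lra.
  - move=> x /=; rewrite /cball /= => h; apply: le_trans h; exact: fL.
by rewrite leNgt hx0.
Qed.
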